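(* Let $G$ be a finite group. Then the power graph $\mathscr{G}(G)$ is overfull if and only if $G$ is cyclic of order $p^a$ for some odd prime $p$ and integer $a \geq 1$.
   Context: For a finite group $G$, the power graph $\mathscr{G}(G)$ is the simple graph with vertex set the elements of $G$, in which two distinct elements $a,b$ are adjacent if and only if one is a power of the other. For a finite simple graph $\Gamma$ on $n$ vertices with maximum vertex degree $\Delta(\Gamma)$, $\Gamma$ is called overfull if $|E(\Gamma)| / \lfloor n/2 \rfloor > \Delta(\Gamma)$. *)

(* Defs.v *)
From mathcomp Require Import all_boot all_order all_fingroup.
Set Implicit Arguments. Unset Strict Implicit. Unset Printing Implicit Defensive.
Local Open Scope group_scope.

Section PowerGraph.
Variables (gT : finGroupType) (G : {group gT}).

Definition pg_adj (a b : gT) : bool :=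
  [&& a \in G, b \in G, a != b & (a \in <[b]>) || (b \in <[a]>)].

Definition pg_edges : {set {set gT}} :=
  [set [set a; b] | a in G, b in G & pg_adj a b].

Definition pg_deg (v : gT) : nat := #|[set b in G | pg_adj v b]|.

Definition pg_maxdeg : nat := \max_(v in G) pg_deg v.

(* overfull: |E| / floor(n/2) > Delta, written without division
   (for n = 1 the graph, having no edges, is not overfull) *)
Definition pg_overfull : bool := pg_maxdeg * (#|G| %/ 2) < #|pg_edges|.
End PowerGraph.

(* Main.v *)
Require Import Defs.
From mathcomp Require Import all_boot all_order all_fingroup all_solvable.
From mathcomp Require Import zify.
Set Implicit Arguments. Unset Strict Implicit. Unset Printing Implicit Defensive.
Section Aux.
Variables (gT : finGroupType) (G : {group gT}).
Local Open Scope group_scope.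

Definition S2 := [set A : {set gT} | A \subset G & #|A| == 2].

Lemma adj_sym a b : pg_adj G a b = pg_adj G b a.
Proof.
rewrite /pg_adj; case: (a \in G); case: (b \in G) => //=.
by rewrite eq_sym orbC.
Qed.

Lemma edges_sub : pg_edges G \subset S2.
Proof.
apply/subsetP => A /imset2P [a b aG]; rewrite inE => /andP [bG adj] ->.
move: adj; rewrite /pg_adj => /and4P [_ _ nab _].
rewrite inE cards2 nab andbT; apply/subsetP => x; rewrite !inE.
by case/orP => /eqP ->.
Qed.

Lemma notin_edges a b : a != b -> ~~ pg_adj G a b -> [set a; b] \notin pg_edges G.
Proof.
move=> nab nadj; apply/imset2P => [[a' b' a'G]]; rewrite inE => /andP [b'G adj] E.
have a'in : a' \in [set a; b] by rewrite E !inE eqxx.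
have b'in : b' \in [set a; b] by rewrite E !inE eqxx orbT.
have ain : a \in [set a'; b'] by rewrite -E !inE eqxx.
have bin : b \in [set a'; b'] by rewrite -E !inE eqxx orbT.
have /and4P [_ _ nab' _] := adj.
move: a'in b'in ain bin; rewrite !inE.
case/orP=> /eqP ea'; case/orP=> /eqP eb'; subst => //;
  by [rewrite eqxx in nab' | rewrite (negbTE nadj) in adj | rewrite adj_sym (negbTE nadj) in adj].
Qed.

Lemma NE_bound (NE : {set {set gT}}) :
  NE \subset S2 -> [disjoint NE & pg_edges G] ->
  #|pg_edges G| + #|NE| <= 'C(#|G|, 2).
Proof.
move=> sub dis.
have : #|NE :|: pg_edges G| <= #|S2|.
  by apply: subset_leq_card; rewrite subUset sub edges_sub.
rewrite cardsU.
have -> : NE :&: pg_edges G = set0.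
  by apply/setP => x; rewrite !inE; case: (boolP (x \in NE)) => // xN; rewrite (disjointFr dis xN).
rewrite cards0 subn0 /S2 cards_draws addnC //.
Qed.

Lemma maxdeg_le : pg_maxdeg G <= #|G|.-1.
Proof.
apply/bigmax_leqP => v vG.
rewrite /pg_deg (cardsD1 v G) vG /=.
apply: subset_leq_card; apply/subsetP => b; rewrite !inE /pg_adj => /andP [bG].
by case/and4P => _ -> nvb _; rewrite eq_sym nvb.
Qed.

Lemma maxdeg_ge : #|G|.-1 <= pg_maxdeg G.
Proof.
apply: leq_trans (leq_bigmax_cond _ (group1 G)).
rewrite /pg_deg (cardsD1 1 G) group1 /=.
apply: subset_leq_card; apply/subsetP => b; rewrite !inE /pg_adj => /andP [nb bG].
by rewrite group1 bG eq_sym nb group1.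
Qed.


Lemma noncyclic_NE : ~~ cyclic G ->
  exists NE : {set {set gT}}, [/\ NE \subset S2, [disjoint NE & pg_edges G]
     & #|G| <= 2 * #|NE|].
Proof.
move=> ncG.
case: (@arg_maxnP _ 1 (mem G) (fun y => #[y]) (group1 G)) => x0 xG xmax.
have xx : x0 \in <[x0]> := cycle_id x0.
have neq y : y \in G :\: <[x0]> -> x0 != y.
  by rewrite !inE => /andP [yx _]; apply: contra yx => /eqP <-; apply: cycle_id.
exists [set [set x0; y] | y in G :\: <[x0]>]; split.
- apply/subsetP => A /imsetP [y yD ->].
  rewrite inE cards2 neq // andbT; apply/subsetP => z; rewrite !inE.
  move: yD; rewrite !inE => /andP [_ yG].
  by case/orP => /eqP ->.
- rewrite disjoint_subset; apply/subsetP => A /imsetP [y yD ->]; rewrite !inE.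
  apply: notin_edges; first exact: neq.
  apply/negP => /and4P [_ _ _ /orP [xy|yx]].
  + have yG : y \in G by move: yD; rewrite !inE => /andP [].
    have sxy : <[x0]> \subset <[y]> by rewrite cycle_subG.
    have hy := xmax y yG.
    have E : <[x0]> == <[y]> :> {set gT} by rewrite eqEcard sxy.
    by move: yD; rewrite !inE (eqP E) cycle_id.
  + by move: yD; rewrite !inE yx.
- rewrite card_in_imset; last first.
    move=> y y' yD y'D E.
    have : y \in [set x0; y'] by rewrite -E !inE eqxx orbT.
    rewrite !inE => /orP [/eqP e|/eqP //].
    by move: (neq _ yD); rewrite e eqxx.
  rewrite cardsD.
  have sxG : <[x0]> \subset G by rewrite cycle_subG.
  rewrite (setIidPr sxG).
  have dv : #|<[x0]>| %| #|G| := order_dvdG xG.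
  have ne : #|<[x0]>| != #|G|.
    apply: contra ncG => /eqP e.
    have E : (<[x0]> == G).
      by rewrite eqEcard sxG /= e.
    by rewrite -(eqP E) cycle_cyclic.
  have m0 : 0 < #|<[x0]>| := cardG_gt0 _.
  have n0 := cardG_gt0 G.
  move: dv ne m0 n0; move: #|<[x0]>| => m /dvdnP [k ->] ne m0 n0.
  have k1 : (k != 1)%N.
    by apply: contra ne => /eqP ->; rewrite mul1n.
  nia.
Qed.


Lemma cyclic_NE A B : cyclic G -> (A * B = #|G|)%N -> coprime A B ->
  exists NE : {set {set gT}}, [/\ NE \subset S2, [disjoint NE & pg_edges G]
     & (A.-1 * B.-1 <= #|NE|)%N].
Proof.
case/cyclicP => g Gg AB cAB.
have gG : g \in G by rewrite Gg cycle_id.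
have n0 := cardG_gt0 G.
have A0 : (0 < A)%N by move: n0; rewrite -AB muln_gt0 => /andP [].
have B0 : (0 < B)%N by move: n0; rewrite -AB muln_gt0 => /andP [].
have oH : #|<[g ^+ B]>| = A.
  rewrite -/(order _) orderXdiv; last by rewrite /order -Gg -AB dvdn_mull.
  by rewrite /order -Gg -AB mulnK.
have oK : #|<[g ^+ A]>| = B.
  rewrite -/(order _) orderXdiv; last by rewrite /order -Gg -AB dvdn_mulr.
  by rewrite /order -Gg -AB mulKn.
set H := <[g ^+ B]>%G. set K := <[g ^+ A]>%G.
have TI : H :&: K = 1 by apply: coprime_TIg; rewrite /= oH oK.
have HG : H \subset G by rewrite /= cycle_subG groupX.
have KG : K \subset G by rewrite /= cycle_subG groupX.
have notK h : h \in H :\ 1 -> h \notin K.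
  rewrite !inE => /andP [h1 hH]; apply/negP => hK.
  have : h \in H :&: K by rewrite inE hH hK.
  by rewrite TI inE (negbTE h1).
have notH k : k \in K :\ 1 -> k \notin H.
  rewrite !inE => /andP [k1 kK]; apply/negP => hH.
  have : k \in H :&: K by rewrite inE hH kK.
  by rewrite TI inE (negbTE k1).
have inK k : k \in K :\ 1 -> k \in K by rewrite inE => /andP [].
have inH k : k \in H :\ 1 -> k \in H by rewrite inE => /andP [].
have neq h k : h \in H :\ 1 -> k \in K :\ 1 -> h != k.
  move=> hH kK; apply: contra (notK _ hH) => /eqP ->; exact: inK.
exists [set [set u.1; u.2] | u in setX (H :\ 1) (K :\ 1)]; split.
- apply/subsetP => S /imsetP [[h k] /=]; rewrite inE /= => /andP [hH kK] ->.
  rewrite inE cards2 neq // andbT; apply/subsetP => z; rewrite !inE.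
  case/orP => /eqP ->; [exact: (subsetP HG _ (inH _ hH)) | exact: (subsetP KG _ (inK _ kK))].
- rewrite disjoint_subset; apply/subsetP => S /imsetP [[h k] /=]; rewrite inE /= => /andP [hH kK] ->.
  rewrite !inE; apply: notin_edges; first exact: neq.
  apply/negP => /and4P [_ _ _ /orP [hk|kh]].
  + have : h \in K by apply: (subsetP _ _ hk); rewrite cycle_subG; exact: inK.
    by rewrite (negbTE (notK _ hH)).
  + have : k \in H by apply: (subsetP _ _ kh); rewrite cycle_subG; exact: inH.
    by rewrite (negbTE (notH _ kK)).
- rewrite card_in_imset; last first.
    move=> [h k] [h' k']; rewrite !in_setX /= => /andP [hH kK] /andP [hH' kK'] E.
    have : h \in [set h'; k'] by rewrite -E !inE eqxx.
    rewrite !inE => /orP [/eqP eh|/eqP ek]; last first.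
      by move: (notK _ hH); rewrite ek (inK _ kK').
    have : k \in [set h'; k'] by rewrite -E !inE eqxx orbT.
    rewrite !inE => /orP [/eqP eh'|/eqP ek']; last by rewrite eh ek'.
    by move: (notH _ kK); rewrite eh' (inH _ hH').
  rewrite cardsX.
  have cH : #|H :\ 1| = A.-1 by have := cardsD1 1 H; rewrite group1 oH => ->.
  have cK : #|K :\ 1| = B.-1 by have := cardsD1 1 K; rewrite group1 oK => ->.
  by rewrite cH cK.
Qed.

Lemma cyc_p_adj p a x y :
  cyclic G -> prime p -> #|G| = (p ^ a)%N -> x \in G -> y \in G -> x != y ->
  pg_adj G x y.
Proof.
move=> cG pp oG xG yG nxy; rewrite /pg_adj xG yG nxy /=.
have [i _ ei] : exists2 i, i <= a & #[x] = (p ^ i)%N.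
  by apply/(dvdn_pfactor _ _ pp); rewrite -oG order_dvdG.
have [j _ ej] : exists2 j, j <= a & #[y] = (p ^ j)%N.
  by apply/(dvdn_pfactor _ _ pp); rewrite -oG order_dvdG.
have sx : <[x]> \subset G by rewrite cycle_subG.
have sy : <[y]> \subset G by rewrite cycle_subG.
case: (leqP i j) => hij.
- have : #|<[x]>| %| #|<[y]>| by rewrite -/(order x) -/(order y) ei ej dvdn_exp2l.
  by rewrite (cardSg_cyclic cG sx sy) cycle_subG => ->.
- have : #|<[y]>| %| #|<[x]>| by rewrite -/(order x) -/(order y) ei ej dvdn_exp2l // ltnW.
  by rewrite (cardSg_cyclic cG sy sx) cycle_subG => ->; rewrite orbT.
Qed.

End Aux.

Lemma arith A B k : 3 <= A -> 3 <= B -> A.-1 * B.-1 <= k -> 2 * k < (A * B).-1 -> False.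
Proof.
move=> hA hB; rewrite -(subnK hA) -(subnK hB); move: (A - 3) (B - 3) => a b.
rewrite !addn3 /= mulSn mulnS /=.  nia.
Qed.

Lemma bin2_odd n : odd n -> 'C(n, 2) = (n.-1 * (n %/ 2) + n %/ 2)%N.
Proof. move=> H; rewrite bin2 -divn2; have: (n %% 2 = 1)%N by rewrite modn2 H. lia. Qed.

Lemma bin2_even n : ~~ odd n -> 'C(n, 2) = (n.-1 * (n %/ 2))%N.
Proof. move=> H; rewrite bin2 -divn2; have: (n %% 2 = 0)%N by rewrite modn2 (negbTE H). nia. Qed.

Theorem mainTheorem1 (gT : finGroupType) (G : {group gT}) :
  pg_overfull G <->
  (cyclic G /\ exists p a : nat, [/\ prime p, odd p, 1 <= a & #|G| = p ^ a]).
Proof.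
have mE : pg_maxdeg G = #|G|.-1.
  by apply/eqP; rewrite eqn_leq maxdeg_le maxdeg_ge.
have Ebnd : #|pg_edges G| <= 'C(#|G|, 2).
  by rewrite -cards_draws; apply: subset_leq_card; apply: edges_sub.
rewrite /pg_overfull mE; split.
- move=> ov.
  have on : odd #|G|.
    apply: contraT => ev; move: Ebnd; rewrite bin2_even //; lia.
  have NEb : forall NE : {set {set gT}}, NE \subset S2 G -> [disjoint NE & pg_edges G] ->
      (2 * #|NE| < #|G|.-1)%N.
    move=> NE sub dis; have := NE_bound sub dis; rewrite bin2_odd //.
    have: (#|G| %% 2 = 1)%N by rewrite modn2 on.
    lia.
  have n1 : 1 < #|G|.
    move: Ebnd ov; rewrite bin2_odd //.
    have := cardG_gt0 G. lia.
  have cG : cyclic G.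
    apply: contraT => ncG; have [NE [sub dis c]] := noncyclic_NE ncG.
    have := NEb _ sub dis; lia.
  split => //.
  set n := #|G| in on n1 NEb *.
  have pp := pdiv_prime n1.
  set p := pdiv n in pp *.
  have pn : p %| n := pdiv_dvd n.
  have op : odd p := dvdn_odd pn on.
  have n0 : 0 < n by lia.
  have AB := partnC p n0.
  have cAB := coprime_partC p n n.
  set A := n`_p in AB cAB. set B := n`_p^' in AB cAB.
  have eA : A = (p ^ logn p n)%N by rewrite /A p_part.
  have la : 0 < logn p n by rewrite logn_gt0 mem_primes pp n0 pn.
  have B0 : 0 < B by rewrite /B part_gt0.
  case: (ltnP 1 B) => hB; last first.
    exists p, (logn p n); split => //.
    have e1 : B = 1%N by lia.
    by move: AB; rewrite e1 muln1 eA => E; exact: esym E.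
  exfalso.
  have [NE [sub dis c]] := cyclic_NE cG AB cAB.
  have := NEb _ sub dis.
  have oA : odd A by apply: (dvdn_odd _ on); rewrite -AB dvdn_mulr.
  have oB : odd B by apply: (dvdn_odd _ on); rewrite -AB dvdn_mull.
  have pA : p <= A.
    apply: dvdn_leq; first by rewrite eA expn_gt0 prime_gt0.
    by rewrite eA -{1}(expn1 p) dvdn_exp2l.
  have p2 := prime_gt1 pp.
  have mA : (A %% 2 = 1)%N by rewrite modn2 oA.
  have mB : (B %% 2 = 1)%N by rewrite modn2 oB.
  have A3 : 3 <= A by clear -mA pA p2; lia.
  have B3 : 3 <= B by clear -mB hB; lia.
  rewrite -[X in _ < X.-1]AB.
  exact: arith A3 B3 c.
- case=> cG [p [a [pp op a1 oG]]].
  have eE : pg_edges G = S2 G.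
    apply/eqP; rewrite eqEsubset edges_sub /=.
    apply/subsetP => S; rewrite inE => /andP [sG /cards2P [x [y [nxy eS]]]].
    have xG : x \in G by apply: (subsetP sG); rewrite eS !inE eqxx.
    have yG : y \in G by apply: (subsetP sG); rewrite eS !inE eqxx orbT.
    apply/imset2P; exists x y => //; rewrite inE yG /=.
    exact: cyc_p_adj cG pp oG xG yG nxy.
  rewrite eE /S2 cards_draws.
  have on : odd #|G| by rewrite oG oddX op orbT.
  rewrite bin2_odd //.
  have : p <= #|G|.
    apply: dvdn_leq; first by rewrite cardG_gt0.
    by rewrite oG -{1}(expn1 p) dvdn_exp2l.
  have p2 := prime_gt1 pp.
  have : (p %% 2 = 1)%N by rewrite modn2 op.
  move: #|G| => n.
  lia.
Qed.
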